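(* For $t\in(0,1)$ and $c\in\mathbb{R}$ define the $2\times2$ matrix $\mathcal{C}_1(c,t)$ with entries $(\mathcal{C}_1)_{11}=24c-\frac{\sqrt3}{12}-\frac{3\sqrt2}{8}-\frac34$, $(\mathcal{C}_1)_{12}=24c-\frac{\sqrt3t+\sqrt3}{3(t+1)^3}-\frac{3(t+3)}{(3t^2+2t+3)^{3/2}}+\frac{3(t-3)}{(3t^2-2t+3)^{3/2}}-\frac{\sqrt3t-\sqrt3}{3(t-1)^3}$, $(\mathcal{C}_1)_{21}=24ct-\frac{\sqrt3t+\sqrt3}{3(t+1)^3}-\frac{3(3t+1)}{(3t^2+2t+3)^{3/2}}-\frac{3(3t-1)}{(3t^2-2t+3)^{3/2}}+\frac{\sqrt3t-\sqrt3}{3(t-1)^3}$, $(\mathcal{C}_1)_{22}=24ct-\frac{2\sqrt3+9\sqrt2+18}{24t^2}$, so that $\det\mathcal{C}_1=\gamma_1(t)c+\gamma_0(t)$ with $$\gamma_1(t)=-\left((2\sqrt3+9\sqrt2+18)t-\frac{72(t^2+6t+1)}{(3t^2+2t+3)^{3/2}}+\frac{72(t^2-6t+1)}{(3t^2-2t+3)^{3/2}}-\frac{8\sqrt3}{t+1}-\frac{8\sqrt3}{t-1}+\frac{2\sqrt3+9\sqrt2+18}{t^2}\right),$$ $$\begin{aligned}\gamma_0(t)=&-\frac{9(3t+1)(t+3)}{(3t^2+2t+3)^3}+\frac{9(3t-1)(t-3)}{(3t^2-2t+3)^3}+\frac{6\sqrt3\sqrt2+12\sqrt3+54\sqrt2+83}{96t^2}\\&-\frac{4\sqrt3}{(3t^2+2t+3)^{3/2}(t+1)}-\frac{2\sqrt3}{(3t^2-2t+3)^{3/2}(t+1)}-\frac{2\sqrt3}{(3t^2+2t+3)^{3/2}(t-1)}-\frac{4\sqrt3}{(3t^2-2t+3)^{3/2}(t-1)}\\&-\frac{144t}{(3t^2+2t+3)^{3/2}(3t^2-2t+3)^{3/2}}-\frac{1}{3(t+1)^4}+\frac{1}{3(t-1)^4}.\end{aligned}$$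 Then: (i) $\gamma_1(t)<0$ for $t\in(0,1)$; (ii) $\gamma_0(t)>0$ for $t\in(0,1)$; (iii) $c(t):=-\gamma_0(t)/\gamma_1(t)>0$ for $t\in(0,1)$; (iv) $(\mathcal{C}_1)_{11}(c(t),t)>0$ for $t\in(0,1)$; (v) there exists $\delta<1$ such that $(\mathcal{C}_1)_{12}(c(t),t)<0$ for $t\in(0,\delta)$ and $(\mathcal{C}_1)_{12}(c(t),t)>0$ for $t\in(\delta,1)$. *)

(* Defs.v *)
From Stdlib Require Import Reals.
Open Scope R_scope.

Definition p32 (x : R) : R := Rpower x (3/2).

Definition A (t : R) : R := 3*t^2 + 2*t + 3.
Definition B (t : R) : R := 3*t^2 - 2*t + 3.
Definition K : R := 2*sqrt 3 + 9*sqrt 2 + 18.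

Definition C11 (c t : R) : R :=
  24*c - sqrt 3 / 12 - 3*sqrt 2 / 8 - 3/4.
Definition C12 (c t : R) : R :=
  24*c - (sqrt 3 * t + sqrt 3) / (3*(t+1)^3) - 3*(t+3) / p32 (A t)
       + 3*(t-3) / p32 (B t) - (sqrt 3 * t - sqrt 3) / (3*(t-1)^3).
Definition C21 (c t : R) : R :=
  24*c*t - (sqrt 3 * t + sqrt 3) / (3*(t+1)^3) - 3*(3*t+1) / p32 (A t)
       - 3*(3*t-1) / p32 (B t) + (sqrt 3 * t - sqrt 3) / (3*(t-1)^3).
Definition C22 (c t : R) : R :=
  24*c*t - K / (24*t^2).

Definition detC1 (c t : R) : R := C11 c t * C22 c t - C12 c t * C21 c t.

Definition gamma1 (t : R) : R :=
  - (K*t - 72*(t^2 + 6*t + 1) / p32 (A t) + 72*(t^2 - 6*t + 1) / p32 (B t)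
     - 8*sqrt 3 / (t+1) - 8*sqrt 3 / (t-1) + K / t^2).

Definition gamma0 (t : R) : R :=
  - 9*(3*t+1)*(t+3) / (A t)^3 + 9*(3*t-1)*(t-3) / (B t)^3
  + (6*sqrt 3*sqrt 2 + 12*sqrt 3 + 54*sqrt 2 + 83) / (96*t^2)
  - 4*sqrt 3 / (p32 (A t) * (t+1)) - 2*sqrt 3 / (p32 (B t) * (t+1))
  - 2*sqrt 3 / (p32 (A t) * (t-1)) - 4*sqrt 3 / (p32 (B t) * (t-1))
  - 144*t / (p32 (A t) * p32 (B t))
  - 1 / (3*(t+1)^4) + 1 / (3*(t-1)^4).

Definition cstar (t : R) : R := - gamma0 t / gamma1 t.

(* Main.v *)
Require Import Defs.
From Stdlib Require Import Reals.
From Stdlib Require Import Bool ZArith Lia Lra Psatz Classical.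
Open Scope R_scope.

Inductive expr :=
| EVar | EZ (z : Z) | EAdd (a b : expr) | ESub (a b : expr) | EMul (a b : expr)
| EDiv (a b : expr) | EOpp (a : expr) | EInv (a : expr) | ESqrt (a : expr)
| EPow (a : expr) (n : nat).

Fixpoint eval (x : R) (e : expr) : R :=
  match e with
  | EVar => x | EZ z => IZR z
  | EAdd a b => Rplus (eval x a) (eval x b)
  | ESub a b => Rminus (eval x a) (eval x b)
  | EMul a b => Rmult (eval x a) (eval x b)
  | EDiv a b => Rdiv (eval x a) (eval x b)
  | EOpp a => Ropp (eval x a)
  | EInv a => Rinv (eval x a)
  | ESqrt a => sqrt (eval x a)
  | EPow a n => pow (eval x a) n
  end.

Definition S : Z := 1099511627776%Z. (* 2^40 *)
Lemma S_pos : (0 < S)%Z. Proof. unfold S; lia. Qed.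
Definition SR : R := IZR S.
Lemma SR_pos : (0 < SR)%R. Proof. unfold SR. apply IZR_lt, S_pos. Qed.
Definition val (z : Z) : R := (IZR z / SR)%R.

Definition fdiv (a d : Z) : Z := (a / d)%Z.
Definition cdiv (a d : Z) : Z := (- ((- a) / d))%Z.
Lemma fdiv_le a d : (0 < d)%Z -> (IZR (fdiv a d) * IZR d <= IZR a)%R.
Proof. intro H. rewrite <- mult_IZR. apply IZR_le. unfold fdiv. rewrite Z.mul_comm. apply Z.mul_div_le. lia. Qed.
Lemma cdiv_ge a d : (0 < d)%Z -> (IZR a <= IZR (cdiv a d) * IZR d)%R.
Proof. intro H. rewrite <- mult_IZR. apply IZR_le. unfold cdiv.
  pose proof (Z.mul_div_le (-a) d H). lia. Qed.

Definition inI (x : R) (i : Z * Z) := (val (fst i) <= x <= val (snd i))%R.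

Lemma val_le_div a d y : (0 < d)%Z -> (IZR a / (IZR d * SR) <= y)%R -> (val (fdiv a d) <= y)%R.
Proof.
  intros H E. unfold val. pose proof (fdiv_le a d H). pose proof SR_pos.
  assert (0 < IZR d)%R by (apply IZR_lt; lia).
  apply Rle_trans with (IZR a / (IZR d * SR))%R; auto.
  replace (IZR a / (IZR d * SR))%R with (IZR a / IZR d / SR)%R by (field; lra).
  unfold Rdiv at 1 2. apply Rmult_le_compat_r; [left; apply Rinv_0_lt_compat; auto|].
  apply (Rmult_le_reg_r (IZR d)); auto. unfold Rdiv. rewrite Rmult_assoc, Rinv_l; lra.
Qed.
Lemma val_ge_div a d y : (0 < d)%Z -> (y <= IZR a / (IZR d * SR))%R -> (y <= val (cdiv a d))%R.
Proof.
  intros H E. unfold val. pose proof (cdiv_ge a d H). pose proof SR_pos.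
  assert (0 < IZR d)%R by (apply IZR_lt; lia).
  apply Rle_trans with (IZR a / (IZR d * SR))%R; auto.
  replace (IZR a / (IZR d * SR))%R with (IZR a / IZR d / SR)%R by (field; lra).
  unfold Rdiv at 1 3. apply Rmult_le_compat_r; [left; apply Rinv_0_lt_compat; auto|].
  apply (Rmult_le_reg_r (IZR d)); auto. unfold Rdiv. rewrite Rmult_assoc, Rinv_l; lra.
Qed.

Definition Iadd (i j : Z * Z) := (fst i + fst j, snd i + snd j)%Z.
Lemma Iadd_ok x y i j : inI x i -> inI y j -> inI (x + y) (Iadd i j).
Proof. unfold inI, val, Iadd; simpl. rewrite !plus_IZR. pose proof SR_pos.
  intros. unfold Rdiv in *. rewrite !Rmult_plus_distr_r. lra. Qed.
Definition Iopp (i : Z * Z) := (- snd i, - fst i)%Z.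
Lemma Iopp_ok x i : inI x i -> inI (- x) (Iopp i).
Proof. unfold inI, val, Iopp; simpl. rewrite !opp_IZR. unfold Rdiv. rewrite !Ropp_mult_distr_l_reverse. lra. Qed.
Definition Isub i j := Iadd i (Iopp j).
Lemma Isub_ok x y i j : inI x i -> inI y j -> inI (x - y) (Isub i j).
Proof. intros. unfold Rminus. apply Iadd_ok; auto. apply Iopp_ok; auto. Qed.

Lemma mul_lo a b c d x y m : (a <= x <= b -> c <= y <= d -> m <= a*c -> m <= a*d -> m <= b*c -> m <= b*d -> m <= x*y)%R.
Proof.
  intros [H1 H2] [H3 H4] h1 h2 h3 h4.
  destruct (Rle_dec 0 y).
  - assert (a*y <= x*y)%R by nra. destruct (Rle_dec 0 a); nra.
  - assert (b*y <= x*y)%R by nra. destruct (Rle_dec 0 b); nra.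
Qed.
Lemma mul_hi a b c d x y m : (a <= x <= b -> c <= y <= d -> a*c <= m -> a*d <= m -> b*c <= m -> b*d <= m -> x*y <= m)%R.
Proof.
  intros Hx Hy h1 h2 h3 h4.
  assert (-m <= (-x)*y)%R. { apply (mul_lo (-b) (-a) c d); try lra; nra. } nra.
Qed.

Lemma val_mul a c : (IZR (a * c) / (IZR S * SR) = val a * val c)%R.
Proof. unfold val. rewrite mult_IZR. fold SR. pose proof SR_pos. field. lra. Qed.

Definition Imul (i j : Z * Z) :=
  let p1 := (fst i * fst j)%Z in let p2 := (fst i * snd j)%Z in
  let p3 := (snd i * fst j)%Z in let p4 := (snd i * snd j)%Z in
  (fdiv (Z.min (Z.min p1 p2) (Z.min p3 p4)) S, cdiv (Z.max (Z.max p1 p2) (Z.max p3 p4)) S).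

Lemma IZR_div_mono a b : (a <= b)%Z -> (IZR a / (IZR S * SR) <= IZR b / (IZR S * SR))%R.
Proof. intro H. apply IZR_le in H. pose proof SR_pos. unfold SR in *. unfold Rdiv.
  apply Rmult_le_compat_r; auto. left. apply Rinv_0_lt_compat. nra. Qed.

Lemma Imul_ok x y i j : inI x i -> inI y j -> inI (x * y) (Imul i j).
Proof.
  unfold inI, Imul. destruct i as [a b], j as [c d]; simpl. intros H1 H2. split.
  - apply val_le_div; [apply S_pos|].
    apply (mul_lo (val a) (val b) (val c) (val d)); auto; rewrite <- val_mul; apply IZR_div_mono; lia.
  - apply val_ge_div; [apply S_pos|].
    apply (mul_hi (val a) (val b) (val c) (val d)); auto; rewrite <- val_mul; apply IZR_div_mono; lia.
Qed.

Definition S2 := (S * S)%Z.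
Definition Iinvp (i : Z * Z) := (fdiv S2 (snd i), cdiv S2 (fst i)).
Lemma Iinvp_ok x i : (0 < fst i)%Z -> inI x i -> inI (/ x) (Iinvp i).
Proof.
  destruct i as [a b]; unfold inI, Iinvp; simpl. intros Ha [H1 H2].
  pose proof SR_pos.
  assert (Hva : (0 < val a)%R). { unfold val. apply Rdiv_lt_0_compat; auto. apply IZR_lt; auto. }
  assert (Hb : (0 < b)%Z). { apply lt_IZR. unfold val in *.
    assert (0 < IZR b / SR)%R by lra. apply (Rmult_lt_compat_r SR) in H0; auto.
    unfold Rdiv in H0. rewrite Rmult_assoc, Rinv_l in H0; lra. }
  assert (E : forall z, (0 < z)%Z -> (IZR S2 / (IZR z * SR) = / val z)%R).
  { intros z Hz. unfold val, S2. rewrite mult_IZR. fold SR. assert (0 < IZR z)%R by (apply IZR_lt; auto). field. lra. }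
  split.
  - apply val_le_div; auto. rewrite E by auto. apply Rinv_le_contravar; lra.
  - apply val_ge_div; auto. rewrite E by auto. apply Rinv_le_contravar; lra.
Qed.
Definition Iinv (i : Z * Z) : option (Z * Z) :=
  if Z.ltb 0 (fst i) then Some (Iinvp i)
  else if Z.ltb (snd i) 0 then Some (Iopp (Iinvp (Iopp i))) else None.
Lemma Iinv_ok x i k : inI x i -> Iinv i = Some k -> inI (/ x) k.
Proof.
  unfold Iinv. intros H. destruct (Z.ltb_spec 0 (fst i)).
  - intro E; injection E as <-. apply Iinvp_ok; auto.
  - destruct (Z.ltb_spec (snd i) 0); [|discriminate]. intro E; injection E as <-.
    replace (/ x)%R with (- / - x)%R.
    + apply Iopp_ok, Iinvp_ok. destruct i; simpl in *; lia. apply Iopp_ok; auto.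
    + assert (x <> 0)%R.
      { destruct i as [a b]; unfold inI, val in H; simpl in *. pose proof SR_pos.
        assert (IZR b < 0)%R by (apply IZR_lt; auto).
        assert (IZR b / SR < 0)%R. { unfold Rdiv. apply Rmult_neg_pos; auto. apply Rinv_0_lt_compat; auto. }
        lra. }
      rewrite Rinv_opp. ring.
Qed.

Lemma sqrt_lb r x : (0 <= r -> r * r <= x -> r <= sqrt x)%R.
Proof. intros. rewrite <- (sqrt_square r) by lra. apply sqrt_le_1_alt. lra. Qed.
Lemma sqrt_ub r x : (0 <= r -> x <= r * r -> sqrt x <= r)%R.
Proof. intros. rewrite <- (sqrt_square r) by lra. apply sqrt_le_1_alt. lra. Qed.

Definition Isqrt (i : Z * Z) : option (Z * Z) :=
  if Z.leb 0 (fst i) then Some (Z.sqrt (fst i * S), Z.sqrt (snd i * S) + 1)%Z else None.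
Lemma val_sq z : (val z * val z = IZR (z * z) / (IZR S * SR))%R.
Proof. unfold val. rewrite mult_IZR. fold SR. pose proof SR_pos. field. lra. Qed.
Lemma Isqrt_ok x i k : inI x i -> Isqrt i = Some k -> inI (sqrt x) k.
Proof.
  unfold Isqrt, inI. destruct i as [a b]; simpl. intros [H1 H2].
  destruct (Z.leb_spec 0 a); [|discriminate]. intro E; injection E as <-; simpl.
  pose proof SR_pos. pose proof S_pos.
  assert (Hb : (0 <= b)%Z).
  { destruct (Z.le_gt_cases 0 b); auto. exfalso.
    assert (IZR a <= IZR b)%R. { unfold val in *. apply (Rmult_le_reg_r (/ SR)). apply Rinv_0_lt_compat; auto. lra. }
    apply le_IZR in H5. lia. }
  assert (Hval : forall z, (0 <= z)%Z -> (0 <= val z)%R).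
  { intros z Hz. unfold val, Rdiv. apply Rmult_le_pos; [apply IZR_le; auto | left; apply Rinv_0_lt_compat; auto]. }
  split.
  - apply sqrt_lb. apply Hval. apply Z.sqrt_nonneg.
    rewrite val_sq. apply Rle_trans with (IZR (a * S) / (IZR S * SR))%R.
    + apply IZR_div_mono. pose proof (Z.sqrt_spec (a * S)) as Hs. specialize (Hs ltac:(nia)); cbv zeta in Hs. lia.
    + replace (IZR (a * S) / (IZR S * SR))%R with (val a); [lra|].
      unfold val. rewrite mult_IZR. fold SR. field. lra.
  - apply sqrt_ub. apply Hval. pose proof (Z.sqrt_nonneg (b*S)). lia.
    rewrite val_sq. apply Rle_trans with (IZR (b * S) / (IZR S * SR))%R.
    + replace (IZR (b * S) / (IZR S * SR))%R with (val b); [lra|].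
      unfold val. rewrite mult_IZR. fold SR. field. lra.
    + apply IZR_div_mono. pose proof (Z.sqrt_spec (b * S)) as Hs. specialize (Hs ltac:(nia)); cbv zeta in Hs.
      unfold Z.succ in Hs. lia.
Qed.

Fixpoint Ipow (i : Z * Z) (n : nat) : Z * Z :=
  match n with O => (S, S) | Datatypes.S n' => Imul i (Ipow i n') end.
Lemma Ipow_ok x i n : inI x i -> inI (x ^ n) (Ipow i n).
Proof.
  intro H. induction n; simpl.
  - unfold inI, val; simpl. fold SR. pose proof SR_pos. unfold Rdiv. rewrite Rinv_r; lra.
  - apply Imul_ok; auto.
Qed.

Fixpoint ieval (i : Z * Z) (e : expr) : option (Z * Z) :=
  match e with
  | EVar => Some i
  | EZ z => Some (z * S, z * S)%Z
  | EAdd a b => match ieval i a, ieval i b with Some x, Some y => Some (Iadd x y) | _, _ => None end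
  | ESub a b => match ieval i a, ieval i b with Some x, Some y => Some (Isub x y) | _, _ => None end
  | EMul a b => match ieval i a, ieval i b with Some x, Some y => Some (Imul x y) | _, _ => None end
  | EDiv a b => match ieval i a, ieval i b with
                | Some x, Some y => match Iinv y with Some y' => Some (Imul x y') | None => None end
                | _, _ => None end
  | EOpp a => match ieval i a with Some x => Some (Iopp x) | None => None end
  | EInv a => match ieval i a with Some x => Iinv x | None => None end
  | ESqrt a => match ieval i a with Some x => Isqrt x | None => None end
  | EPow a n => match ieval i a with Some x => Some (Ipow x n) | None => None end
  end.

Lemma ieval_ok x i e k : inI x i -> ieval i e = Some k -> inI (eval x e) k.
Proof.
  intro H. revert k. induction e; simpl; intros k E.
  - injection E as <-; auto.
  - injection E as <-. unfold inI, val; simpl. fold SR. rewrite mult_IZR. fold SR.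
    pose proof SR_pos. unfold Rdiv. rewrite Rmult_assoc, Rinv_r; lra.
  - destruct (ieval i e1), (ieval i e2); try discriminate. injection E as <-. apply Iadd_ok; auto.
  - destruct (ieval i e1), (ieval i e2); try discriminate. injection E as <-. apply Isub_ok; auto.
  - destruct (ieval i e1), (ieval i e2); try discriminate. injection E as <-. apply Imul_ok; auto.
  - destruct (ieval i e1), (ieval i e2); try discriminate.
    destruct (Iinv p0) eqn:F; try discriminate. injection E as <-. unfold Rdiv.
    apply Imul_ok; auto. eapply Iinv_ok; eauto.
  - destruct (ieval i e); try discriminate. injection E as <-. apply Iopp_ok; auto.
  - destruct (ieval i e); try discriminate. eapply Iinv_ok; eauto.
  - destruct (ieval i e); try discriminate. eapply Isqrt_ok; eauto.
  - destruct (ieval i e); try discriminate. injection E as <-. apply Ipow_ok; auto.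
Qed.

Fixpoint checkpos (n : nat) (e : expr) (lo hi : Z) : bool :=
  let rec := fun _ : unit => match n with
             | O => false
             | Datatypes.S n' => let m := Z.div (lo + hi) 2 in
                       andb (checkpos n' e lo m) (checkpos n' e m hi)
             end in
  match ieval (lo, hi) e with
  | Some (l, _) => if Z.ltb 0 l then true else rec tt
  | None => rec tt
  end.

Lemma checkpos_ok n e lo hi : checkpos n e lo hi = true ->
  forall x, (val lo <= x <= val hi)%R -> (0 < eval x e)%R.
Proof.
  revert lo hi. induction n; intros lo hi; simpl; intros C x Hx.
  - destruct (ieval (lo, hi) e) as [[l h]|] eqn:E; try discriminate.
    destruct (Z.ltb_spec 0 l) as [L|L]; try discriminate.
    apply (ieval_ok x) in E; [|exact Hx]. unfold inI in E; simpl in E.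
    assert (0 < val l)%R. { unfold val. apply Rdiv_lt_0_compat. apply IZR_lt; auto. apply SR_pos. }
    lra.
  - assert (Hrec : (checkpos n e lo (Z.div (lo + hi) 2)
        && checkpos n e (Z.div (lo + hi) 2) hi)%bool = true -> (0 < eval x e)%R).
    { intro R. apply andb_prop in R as [R1 R2].
      destruct (Rle_dec x (val (Z.div (lo + hi) 2))).
      - eapply IHn; [exact R1|]. lra.
      - eapply IHn; [exact R2|]. lra. }
    destruct (ieval (lo, hi) e) as [[l h]|] eqn:E; auto.
    destruct (Z.ltb_spec 0 l) as [L|L]; auto.
    apply (ieval_ok x) in E; [|exact Hx]. unfold inI in E; simpl in E.
    assert (0 < val l)%R. { unfold val. apply Rdiv_lt_0_compat. apply IZR_lt; auto. apply SR_pos. }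
    lra.
Qed.

Ltac reify x e :=
    lazymatch e with
    | x => constr:(EVar)
    | IZR ?z => constr:(EZ z)
    | R0 => constr:(EZ 0)
    | R1 => constr:(EZ 1)
    | Rplus ?a ?b => let ra := reify x a in let rb := reify x b in constr:(EAdd ra rb)
    | Rminus ?a ?b => let ra := reify x a in let rb := reify x b in constr:(ESub ra rb)
    | Rmult ?a ?b => let ra := reify x a in let rb := reify x b in constr:(EMul ra rb)
    | Rdiv ?a ?b => let ra := reify x a in let rb := reify x b in constr:(EDiv ra rb)
    | Ropp ?a => let ra := reify x a in constr:(EOpp ra)
    | Rinv ?a => let ra := reify x a in constr:(EInv ra)
    | sqrt ?a => let ra := reify x a in constr:(ESqrt ra)
    | pow ?a ?n => let ra := reify x a in constr:(EPow ra n)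
    end.

Ltac prove_pos x lo hi n :=
  lazymatch goal with
  | |- (0 < ?f)%R =>
    let r := reify x f in
    change (0 < eval x r)%R;
    apply (checkpos_ok n r lo hi); [vm_compute; reflexivity | unfold val, SR, S; lra]
  end.


Lemma p32_eq x : 0 < x -> p32 x = x * sqrt x.
Proof.
  intro H. unfold p32. replace (3/2) with (1 + /2) by field.
  rewrite Rpower_plus, Rpower_1 by auto. rewrite Rpower_sqrt by auto. reflexivity.
Qed.
Lemma A_pos t : 0 < A t. Proof. unfold A. nra. Qed.
Lemma B_pos t : 0 < B t. Proof. unfold B. nra. Qed.
Lemma sA_pos t : 0 < sqrt (A t). Proof. apply sqrt_lt_R0, A_pos. Qed.
Lemma sB_pos t : 0 < sqrt (B t). Proof. apply sqrt_lt_R0, B_pos. Qed.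

Definition s3 := sqrt 3.
Definition s2 := sqrt 2.
Definition uA t := / (A t * sqrt (A t)).
Definition vB t := / (B t * sqrt (B t)).

Definition Fi t := K*t^3*(1-t) + K*(1-t) - 72*(t^2+6*t+1)*uA t*t^2*(1-t)
  + 72*(t^2-6*t+1)*vB t*t^2*(1-t) - 8*sqrt 3*t^2*(1-t)/(t+1) + 8*sqrt 3*t^2.

Lemma Fi_id t : 0 < t < 1 -> t^2*(1-t)*(- gamma1 t) = Fi t.
Proof.
  intro H. unfold gamma1, Fi, uA, vB.
  rewrite !p32_eq by (apply A_pos || apply B_pos).
  pose proof (A_pos t). pose proof (B_pos t). pose proof (sA_pos t). pose proof (sB_pos t).
  field. repeat split; try lra; nra.
Qed.

Lemma Fi_pos t : 0 <= t <= 1 -> 0 < Fi t.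
Proof.
  intro H. unfold Fi, uA, vB, A, B, K.
  prove_pos t 0%Z 1099511627776%Z 20%nat.
Qed.

Definition Nc := 6*sqrt 3*sqrt 2 + 12*sqrt 3 + 54*sqrt 2 + 83.
Definition Fii t := -9*(3*t+1)*(t+3)*t^2*(1-t)^4/(A t)^3 + 9*(3*t-1)*(t-3)*t^2*(1-t)^4/(B t)^3
  + (6*sqrt 3*sqrt 2 + 12*sqrt 3 + 54*sqrt 2 + 83)*(1-t)^4/96
  - 4*sqrt 3*uA t*t^2*(1-t)^4/(t+1) - 2*sqrt 3*vB t*t^2*(1-t)^4/(t+1)
  + 2*sqrt 3*uA t*t^2*(1-t)^3 + 4*sqrt 3*vB t*t^2*(1-t)^3
  - 144*t^3*(1-t)^4*uA t*vB t - t^2*(1-t)^4/(3*(t+1)^4) + t^2/3.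

Lemma Fii_id t : 0 < t < 1 -> t^2*(1-t)^4*gamma0 t = Fii t.
Proof.
  intro H. unfold gamma0, Fii, uA, vB.
  rewrite !p32_eq by (apply A_pos || apply B_pos).
  pose proof (A_pos t). pose proof (B_pos t). pose proof (sA_pos t). pose proof (sB_pos t).
  field. repeat split; try lra; nra.
Qed.

Lemma Fii_pos t : 0 <= t <= 1 -> 0 < Fii t.
Proof.
  intro H. unfold Fii, uA, vB, A, B.
  prove_pos t 0%Z 1099511627776%Z 20%nat.
Qed.

Definition c0 := (sqrt 3/12 + 3*sqrt 2/8 + 3/4)/24.
Definition Dexp t := -4*uA t*vB t*((A t)^2 + A t*B t + (B t)^2)/(A t*sqrt (A t) + B t*sqrt (B t)).

Lemma D_id t : t <> 0 -> (uA t - vB t)/t = Dexp t.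
Proof.
  intro Ht. unfold Dexp, uA, vB.
  pose proof (A_pos t). pose proof (B_pos t). pose proof (sA_pos t) as Ha. pose proof (sB_pos t) as Hb.
  pose proof (sqrt_sqrt (A t) (Rlt_le _ _ (A_pos t))) as Ea.
  pose proof (sqrt_sqrt (B t) (Rlt_le _ _ (B_pos t))) as Eb.
  set (a := sqrt (A t)) in *. set (b := sqrt (B t)) in *.
  assert (key : (B t*b - A t*a)*(A t*a + B t*b) = -4*t*((A t)^2 + A t*B t + (B t)^2)).
  { replace ((B t*b - A t*a)*(A t*a + B t*b)) with ((B t)^2*(b*b) - (A t)^2*(a*a)) by ring.
    rewrite Ea, Eb. unfold A, B. ring. }
  assert (Hs : 0 < A t*a + B t*b) by nra.
  assert (E2 : B t*b - A t*a = -4*t*((A t)^2 + A t*B t + (B t)^2) / (A t*a + B t*b)).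
  { rewrite <- key. field. lra. }
  replace (/ (A t * a) - / (B t * b)) with ((B t*b - A t*a) / (A t*a*(B t*b))) by (field; split; nra).
  rewrite E2. field. repeat split; try lra; nra.
Qed.

Definition FivG t D := (1-t)^4*(-9)*((3*t^2+3)*(-4)*((A t)^2+A t*B t+(B t)^2)/((A t)^3*(B t)^3) + 10*(/(A t)^3 + /(B t)^3))
  + 12*sqrt 3*uA t*(1-t)^3/(1+t) + (-4*sqrt 3*(1-t)^3 + 2*sqrt 3*(1-t)^4/(t+1))*D
  - 144*uA t*vB t*(1-t)^4 + (8*t^2+8)/(3*(1+t)^4)
  + c0*(-K*(1-t)^4 + 864*uA t*(1-t)^4 + 72*(t^2-6*t+1)*D*(1-t)^4) - c0*16*sqrt 3*(1-t)^3/(1+t).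

Lemma NcK : Nc - 96*c0*K = 0.
Proof.
  unfold Nc, c0, K.
  pose proof (sqrt_sqrt 2 ltac:(lra)). pose proof (sqrt_sqrt 3 ltac:(lra)). lra.
Qed.

Lemma Fiv_id t : 0 < t < 1 -> (1-t)^4*(gamma0 t + c0*gamma1 t) = t * FivG t (Dexp t).
Proof.
  intro H. rewrite <- D_id by lra.
  assert (E : (1-t)^4*(gamma0 t + c0*gamma1 t) = t * FivG t ((uA t - vB t)/t) + (Nc - 96*c0*K)*(1-t)^4/(96*t^2)).
  { unfold gamma0, gamma1, FivG, uA, vB, Nc.
    rewrite !p32_eq by (apply A_pos || apply B_pos).
    pose proof (A_pos t). pose proof (B_pos t). pose proof (sA_pos t). pose proof (sB_pos t).
    unfold A, B in *. field. repeat split; try lra; nra. }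
  rewrite E, NcK. field. lra.
Qed.

Lemma Fiv_pos t : 0 <= t <= 1 -> 0 < FivG t (Dexp t).
Proof.
  intro H. unfold FivG, Dexp, c0, uA, vB, A, B, K.
  prove_pos t 0%Z 1099511627776%Z 20%nat.
Qed.

Definition G t := -sqrt 3*(1-t)^3/(3*(t+1)^2) - 3*(t+3)*uA t*(1-t)^3 + 3*(t-3)*vB t*(1-t)^3 - sqrt 3*(1-t)/3.
Definition Fv t := 24*Fii t + G t * Fi t.

Lemma Fv_id t : 0 < t < 1 -> gamma1 t <> 0 ->
  t^2*(1-t)^4*(C12 (cstar t) t * (- gamma1 t)) = Fv t.
Proof.
  intros H Hg. unfold Fv. rewrite <- Fii_id, <- Fi_id by auto.
  unfold G, C12, cstar, uA, vB.
  rewrite !p32_eq by (apply A_pos || apply B_pos).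
  pose proof (A_pos t). pose proof (B_pos t). pose proof (sA_pos t). pose proof (sB_pos t).
  field. repeat split; try lra; nra.
Qed.

Lemma Fv_neg t : 0 <= t <= 19/32 -> 0 < - Fv t.
Proof.
  intro H. unfold Fv, Fii, Fi, G, uA, vB, A, B, K.
  prove_pos t 0%Z 652835028992%Z 20%nat.
Qed.
Lemma Fv_pos t : 5/8 <= t <= 1 -> 0 < Fv t.
Proof.
  intro H. unfold Fv, Fii, Fi, G, uA, vB, A, B, K.
  prove_pos t 687194767360%Z 1099511627776%Z 20%nat.
Qed.

From Coquelicot Require Import Coquelicot.
Open Scope R_scope.

Ltac posR := lazymatch goal with
  | |- 0 < ?a * ?b => apply Rmult_lt_0_compat; posR
  | |- 0 < sqrt ?a => apply sqrt_lt_R0; posR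
  | |- 0 < ?a => nra
  end.
Ltac domR := repeat match goal with
  | |- _ /\ _ => split
  | |- True => exact I
  | |- _ <> 0 => apply Rgt_not_eq; unfold Rgt; posR
  | |- 0 < _ => posR
  end.

Lemma Fv_deriv c : 19/32 <= c <= 5/8 -> exists l, derivable_pt_lim Fv c l /\ 0 < l.
Proof.
  intro H. eexists; split.
  - apply is_derive_Reals. unfold Fv, Fii, Fi, G, uA, vB, A, B, K.
    auto_derive; [domR | reflexivity].
  - prove_pos c 652835028992%Z 687194767360%Z 25%nat.
Qed.

Lemma p32_pos x : 0 < p32 x.
Proof. unfold p32, Rpower. apply exp_pos. Qed.
Lemma p32_sq x : 0 < x -> p32 x ^ 2 = x ^ 3.
Proof.
  intro H. rewrite p32_eq by auto.
  replace ((x * sqrt x)^2) with (x^2 * (sqrt x * sqrt x)) by ring.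
  rewrite sqrt_sqrt by lra. ring.
Qed.

Lemma det_id c t : 0 < t < 1 -> detC1 c t = gamma1 t * c + gamma0 t.
Proof.
  intro H. apply Rminus_diag_uniq.
  assert (E : detC1 c t - (gamma1 t * c + gamma0 t) =
     (sqrt 3 * sqrt 3 - 3) * (1/(144*t^2) - 1/(9*(t+1)^4) + 1/(9*(t-1)^4))
     + (sqrt 2 * sqrt 2 - 2) * (9/(64*t^2))).
  { unfold detC1, C11, C12, C21, C22, gamma1, gamma0, K.
    rewrite <- (p32_sq (A t)) by apply A_pos. rewrite <- (p32_sq (B t)) by apply B_pos.
    pose proof (p32_pos (A t)). pose proof (p32_pos (B t)).
    field. repeat split; try lra. }
  rewrite E, !sqrt_sqrt by lra. ring.
Qed.

Lemma g1_neg t : 0 < t < 1 -> gamma1 t < 0.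
Proof.
  intro H. pose proof (Fi_id t H). pose proof (Fi_pos t ltac:(lra)).
  assert (0 < t^2*(1-t)) by (apply Rmult_lt_0_compat; nra).
  destruct (Rlt_or_le (gamma1 t) 0); auto. nra.
Qed.

Lemma g0_pos t : 0 < t < 1 -> gamma0 t > 0.
Proof.
  intro H. pose proof (Fii_id t H). pose proof (Fii_pos t ltac:(lra)).
  assert (0 < t^2*(1-t)^4) by (apply Rmult_lt_0_compat; [nra| apply pow_lt; lra]).
  destruct (Rlt_or_le 0 (gamma0 t)); auto. nra.
Qed.

Lemma cstar_pos t : 0 < t < 1 -> cstar t > 0.
Proof.
  intro H. pose proof (g1_neg t H). pose proof (g0_pos t H). unfold cstar.
  replace (- gamma0 t / gamma1 t) with (gamma0 t / - gamma1 t) by (field; lra).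
  apply Rdiv_lt_0_compat; lra.
Qed.

Lemma C11_pos t : 0 < t < 1 -> C11 (cstar t) t > 0.
Proof.
  intro H. pose proof (g1_neg t H).
  pose proof (Fiv_id t H). pose proof (Fiv_pos t ltac:(lra)).
  assert (P4 : 0 < (1-t)^4) by (apply pow_lt; lra).
  assert (Hs : 0 < gamma0 t + c0*gamma1 t).
  { destruct (Rlt_or_le 0 (gamma0 t + c0*gamma1 t)); auto.
    assert (0 < t * FivG t (Dexp t)) by (apply Rmult_lt_0_compat; lra). nra. }
  assert (E : C11 (cstar t) t = 24*(gamma0 t + c0*gamma1 t) / (- gamma1 t)).
  { unfold C11, cstar, c0. field. lra. }
  rewrite E. apply Rdiv_lt_0_compat; lra.
Qed.

Lemma Fv_incr s t : 19/32 <= s -> s < t -> t <= 5/8 -> Fv s < Fv t.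
Proof.
  intros H1 H2 H3.
  destruct (MVT_cor2 Fv (Derive Fv) s t H2) as [c [E Hc]].
  { intros c Hc. destruct (Fv_deriv c ltac:(lra)) as [l [Hl _]].
    replace (Derive Fv c) with l; auto.
    symmetry. apply is_derive_unique. apply is_derive_Reals. exact Hl. }
  destruct (Fv_deriv c ltac:(lra)) as [l [Hl Hp]].
  replace (Derive Fv c) with l in E.
  2:{ symmetry. apply is_derive_unique. apply is_derive_Reals. exact Hl. }
  nra.
Qed.

Lemma C12_sign t : 0 < t < 1 ->
  (Fv t < 0 -> C12 (cstar t) t < 0) /\ (Fv t > 0 -> C12 (cstar t) t > 0).
Proof.
  intro H. pose proof (g1_neg t H).
  pose proof (Fv_id t H ltac:(lra)) as E.
  assert (P : 0 < t^2*(1-t)^4*(- gamma1 t)).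
  { apply Rmult_lt_0_compat; [apply Rmult_lt_0_compat; [nra| apply pow_lt; lra] | lra]. }
  replace (t ^ 2 * (1 - t) ^ 4 * (C12 (cstar t) t * - gamma1 t))
    with (C12 (cstar t) t * (t^2*(1-t)^4*(- gamma1 t))) in E by ring.
  split; intro F; destruct (Rlt_or_le 0 (C12 (cstar t) t)); try nra.
Qed.

Theorem lemma6 :
  (forall c t, 0 < t < 1 -> detC1 c t = gamma1 t * c + gamma0 t) /\
  (forall t, 0 < t < 1 -> gamma1 t < 0) /\
  (forall t, 0 < t < 1 -> gamma0 t > 0) /\
  (forall t, 0 < t < 1 -> cstar t > 0) /\
  (forall t, 0 < t < 1 -> C11 (cstar t) t > 0) /\
  (exists delta, delta < 1 /\
     (forall t, 0 < t < delta -> C12 (cstar t) t < 0) /\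
     (forall t, delta < t < 1 -> C12 (cstar t) t > 0)).
Proof.
  split; [exact det_id|]. split; [exact g1_neg|]. split; [exact g0_pos|].
  split; [exact cstar_pos|]. split; [exact C11_pos|].
  set (E := fun x => 0 < -x < 1 /\ 0 <= Fv (-x)).
  assert (Hb : bound E). { exists 0. intros x [Hx _]. lra. }
  assert (Hn : exists x, E x).
  { exists (-(7/10)). split; [lra|]. left. apply Fv_pos. lra. }
  destruct (completeness E Hb Hn) as [m [Hub Hlub]].
  assert (Hm : -(7/10) <= m). { apply Hub. split; [lra|]. left. apply Fv_pos. lra. }
  assert (Hm0 : m <= 0). { apply Hlub. intros x [Hx _]. lra. }
  exists (-m). split; [|split].
  - lra.
  - intros t Ht. apply (proj1 (C12_sign t ltac:(lra))).
    destruct (Rlt_or_le (Fv t) 0) as [F|F]; auto.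
    assert (-t <= m). { apply Hub. split. lra. rewrite Ropp_involutive. exact F. } lra.
  - intros t Ht. apply (proj2 (C12_sign t ltac:(lra))).
    destruct (classic (exists s, E s /\ -t < s)) as [[s [[Hs1 Hs2] Hs3]]|N].
    + assert (19/32 < -s).
      { destruct (Rlt_or_le (19/32) (-s)); auto. pose proof (Fv_neg (-s) ltac:(lra)). lra. }
      destruct (Rlt_or_le t (5/8)).
      * pose proof (Fv_incr (-s) t ltac:(lra) ltac:(lra) ltac:(lra)). lra.
      * apply Fv_pos. lra.
    + assert (m <= -t).
      { apply Hlub. intros x Hx. destruct (Rlt_or_le (-t) x); auto. exfalso; apply N; eauto. }
      lra.
Qed.
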